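(* Let $n\geq 3$. The group $S_1\times S_{n-1}$ acts freely and transitively on $C_n$.
   Context: $\overline{\Pi}_n$ is the poset of set partitions of $[n]$ ordered by refinement (finer is smaller), with minimum and maximum removed; $\Delta(\overline{\Pi}_n)$ is its order complex (simplices are nonempty chains), with the natural action of $S_n$ induced from its action on $[n]$. $S_1\times S_{n-1}=\{\sigma\in S_n\mid\sigma(1)=1\}$. $A$ is the set of partitions in $\overline{\Pi}_n$ all of whose blocks not containing $1$ are singletons; $C_n$ is the set of $(n-3)$-dimensional simplices (chains of $n-2$ elements) all of whose vertices lie in $A$. *)

(* Defs.v *)
From mathcomp Require Import all_boot fingroup perm.
Set Implicit Arguments. Unset Strict Implicit. Unset Printing Implicit Defensive.

(* The ground set [n] = {1,...,n} is modelled by 'I_n = {0,...,n-1};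
   the element "1" of [n] is the ordinal with value 0. *)

Section PartitionLattice.
Variable n : nat.
Notation T := 'I_n.

Definition is_setpart (P : {set {set T}}) : bool := partition P [set: T].

Definition refines (P Q : {set {set T}}) : bool :=
  [forall B in P, exists C in Q, B \subset C].

Definition part_min : {set {set T}} := [set [set i] | i : T].
Definition part_max : {set {set T}} := [set [set: T]].

Definition in_Pibar (P : {set {set T}}) : bool :=
  [&& is_setpart P, P != part_min & P != part_max].

Definition in_A (P : {set {set T}}) : bool :=
  in_Pibar P &&
  [forall B in P, [exists i in B, val i == 0] || (#|B| == 1)].

(* C_n: (n-3)-simplices (chains of n-2 elements) of the order complex
   with all vertices in A *)
Definition in_C (S : {set {set {set T}}}) : bool :=
  [&& #|S| == n - 2,
      [forall P in S, in_A P] &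
      [forall P in S, forall Q in S, refines P Q || refines Q P]].

Definition part_act (s : {perm T}) (P : {set {set T}}) : {set {set T}} :=
  [set [set s i | i in B] | B : {set T} in P].

Definition simp_act (s : {perm T}) (S : {set {set {set T}}})
  : {set {set {set T}}} :=
  [set part_act s P | P : {set {set T}} in S].

(* S_1 x S_{n-1}: permutations fixing 1 *)
Definition fixes1 (s : {perm T}) : Prop :=
  forall i : T, val i = 0 -> s i = i.

End PartitionLattice.

(* Main.v *)
Require Import Defs.
From mathcomp Require Import all_boot fingroup perm.
From mathcomp Require Import zify.
Set Implicit Arguments. Unset Strict Implicit. Unset Printing Implicit Defensive.

Section Main.
Variable m : nat.
Local Notation n := m.+3.
Local Notation T := 'I_n.
Implicit Types (P Q : {set {set T}}) (X Y : {set T}) (s : {perm T}).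

Definition pA X : {set {set T}} := X |: [set [set i] | i in ~: X].
Definition cb P : {set T} := pblock P ord0.

Lemma pA_in X B : (B \in pA X) = (B == X) || [exists i, (i \notin X) && (B == [set i])].
Proof.
rewrite /pA in_setU1; congr (_ || _); apply/imsetP/existsP.
  by case=> i; rewrite inE => hi ->; exists i; rewrite hi eqxx.
by case=> i /andP[hi /eqP ->]; exists i; rewrite ?inE.
Qed.

Lemma pA_part X : ord0 \in X -> is_setpart (pA X).
Proof.
move=> h0; apply/and3P; split.
- apply/eqP/setP=> i; rewrite inE; apply/bigcupP.
  case hi: (i \in X); first by exists X => //; rewrite pA_in eqxx.
  exists [set i]; last by rewrite inE.
  by rewrite pA_in; apply/orP; right; apply/existsP; exists i; rewrite hi eqxx.
- apply/trivIsetP=> B C; rewrite !pA_in.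
  case/orP=> [/eqP->|/existsP[i /andP[hi /eqP->]]];
  case/orP=> [/eqP->|/existsP[j /andP[hj /eqP->]]].
  + by rewrite eqxx.
  + by move=> _; have := disjoints1 X j; rewrite hj disjoint_sym.
  + by move=> _; rewrite disjoints1.
  + by move=> hij; rewrite disjoints1 inE; apply: contra hij => /eqP->.
- rewrite pA_in negb_or; apply/andP; split.
    by apply/eqP=> h; move: h0; rewrite -h inE.
  apply/existsP=> [[i /andP[_ /eqP h]]]; by move: (set11 i); rewrite -h inE.
Qed.

Lemma cb_pA X : ord0 \in X -> cb (pA X) = X.
Proof.
move=> h0; rewrite /cb; apply: def_pblock => //.
  by case/and3P: (pA_part h0).
by rewrite pA_in eqxx.
Qed.

Lemma inA_pA X : ord0 \in X -> 1 < #|X| -> #|X| < n -> in_A (pA X).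
Proof.
move=> h0 h1 h2; apply/andP; split; last first.
  apply/forallP=> B; apply/implyP; rewrite pA_in.
  case/orP=> [/eqP->|/existsP[i /andP[hi /eqP->]]].
    by apply/orP; left; apply/existsP; exists ord0; rewrite h0.
  by rewrite cards1 eqxx orbT.
apply/and3P; split; first exact: pA_part.
  apply/eqP=> h; have : X \in pA X by rewrite pA_in eqxx.
  rewrite h => /imsetP[i _ hX]; move: h1; by rewrite hX cards1.
apply/eqP=> h; have : X \in pA X by rewrite pA_in eqxx.
rewrite h inE => /eqP hX; move: h2; by rewrite hX cardsT card_ord ltnn.
Qed.

Lemma pA_min : pA [set ord0] = part_min n.
Proof.
apply/setP=> B; rewrite pA_in; apply/idP/imsetP.
  case/orP=> [/eqP->|/existsP[i /andP[_ /eqP->]]]; by eexists.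
case=> i _ ->; case: (eqVneq i ord0) => [->|hi]; first by rewrite eqxx.
by apply/orP; right; apply/existsP; exists i; rewrite inE hi eqxx.
Qed.

Lemma pA_max : pA [set: T] = part_max n.
Proof.
apply/setP=> B; rewrite pA_in inE; case: (B == _) => //=.
by apply/existsP=> [[i /andP[]]]; rewrite inE.
Qed.

Lemma inA_cb P : in_A P ->
  [/\ P = pA (cb P), ord0 \in cb P, 1 < #|cb P| & #|cb P| < n].
Proof.
case/andP=> /and3P[hp hmin hmax] /forallP hB.
case/and3P: (hp) => /eqP cov triv _.
have covx : forall x, x \in cover P by move=> x; rewrite cov inE.
set C := cb P.
have hC : C \in P by apply: pblock_mem.
have h0 : ord0 \in C by rewrite /C /cb mem_pblock.
have eP : P = pA C.
  apply/setP=> B; rewrite pA_in; apply/idP/idP.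
    move=> hb; move: (hB B); rewrite hb /=; case/orP.
      case/existsP=> i /andP[hi /eqP hv].
      have ei : i = ord0 by apply: val_inj.
      rewrite ei in hi; by rewrite -(def_pblock triv hb hi) /C /cb eqxx.
    case/cards1P=> i hBi; case hiC: (i \in C).
      have e1 := def_pblock triv hC hiC.
      have e2 := def_pblock triv hb (_ : i \in B).
      by rewrite -e2 ?e1 ?eqxx // hBi set11.
    by apply/orP; right; apply/existsP; exists i; rewrite hiC hBi eqxx.
  case/orP=> [/eqP->//|/existsP[i /andP[hi /eqP->]]].
  set D := pblock P i.
  have hD : D \in P by apply: pblock_mem.
  have hiD : i \in D by rewrite mem_pblock.
  move: (hB D); rewrite hD /=; case/orP.
    case/existsP=> j /andP[hj /eqP hv].
    have ej : j = ord0 by apply: val_inj.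
    rewrite ej in hj; move: (def_pblock triv hD hj); rewrite -/(cb P) -/C => eCD.
    by move: hi; rewrite eCD hiD.
  case/cards1P=> k hk; move: hiD; rewrite hk inE => /eqP ik.
  by rewrite ik -hk.
clearbody C; split=> //.
- rewrite ltnNge; apply/negP=> hc.
  have eC : C = [set ord0].
    apply/eqP; rewrite eq_sym eqEcard sub1set h0 cards1 //.
  by move: hmin; rewrite eP eC pA_min eqxx.
- rewrite ltnNge; apply/negP=> hc.
  have eC : C = [set: T].
    apply/eqP; rewrite eqEcard subsetT cardsT card_ord //.
  by move: hmax; rewrite eP eC pA_max eqxx.
Qed.

Lemma imsetC_perm s X : s @: (~: X) = ~: (s @: X).
Proof.
apply/setP=> y; rewrite !inE; have -> : y = s ((s^-1)%g y) by rewrite permKV.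
by rewrite !mem_imset ?inE //; apply: perm_inj.
Qed.

Lemma part_act_pA s X : part_act s (pA X) = pA (s @: X).
Proof.
rewrite /part_act /pA imsetU1; congr (_ |: _).
rewrite -imset_comp -imsetC_perm -imset_comp; apply: eq_imset => i /=.
by rewrite imset_set1.
Qed.

Lemma refines_pA X Y : ord0 \in X -> ord0 \in Y ->
  refines (pA X) (pA Y) -> X \subset Y.
Proof.
move=> hX hY /forallP/(_ X); rewrite pA_in eqxx /= => /existsP[C /andP[]].
rewrite pA_in; case/orP=> [/eqP->//|/existsP[j /andP[hj /eqP->]]].
move=> hs; move: (subsetP hs _ hX); rewrite inE => /eqP ej.
by move: hj; rewrite -ej hY.
Qed.

Lemma refines_act s P Q : refines P Q -> refines (part_act s P) (part_act s Q).
Proof.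
move=> /forallP h; apply/forallP=> B'; apply/implyP=> /imsetP[B hB ->].
move: (h B); rewrite hB => /existsP[C /andP[hC hBC]].
apply/existsP; exists [set s i | i in C]; rewrite imsetS // andbT.
by apply/imsetP; exists C.
Qed.

Lemma part_actK s P : part_act (s^-1)%g (part_act s P) = P.
Proof.
rewrite /part_act -imset_comp -[RHS]imset_id; apply: eq_imset => B /=.
by rewrite -imset_comp -[RHS]imset_id; apply: eq_imset => i /=; rewrite permK.
Qed.

Lemma inA_act s P : s ord0 = ord0 -> in_A P -> in_A (part_act s P).
Proof.
move=> hs /inA_cb[eP h0 h1 h2]; rewrite eP part_act_pA.
apply: inA_pA; rewrite ?card_imset //; try exact: perm_inj.
by rewrite -hs imset_f.
Qed.

Lemma part1 s S : s ord0 = ord0 -> in_C S -> in_C (simp_act s S).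
Proof.
move=> hs /and3P[/eqP hc /forallP hA /forallP hR]; apply/and3P; split.
- rewrite card_imset -?hc //; apply: (can_inj (part_actK s)).
- apply/forallP=> P'; apply/implyP=> /imsetP[P hP ->].
  by apply: inA_act => //; move: (hA P); rewrite hP.
- apply/forallP=> P'; apply/implyP=> /imsetP[P hP ->].
  apply/forallP=> Q'; apply/implyP=> /imsetP[Q hQ ->].
  move: (hR P); rewrite hP /= => /forallP/(_ Q); rewrite hQ /=.
  by case/orP=> h; apply/orP; [left|right]; apply: refines_act.
Qed.

Lemma card_lt j : j <= n -> #|[set k : T | k < j]| = j.
Proof.
move=> hj.
have -> : [set k : T | k < j] = [set widen_ord hj k | k : 'I_j].
  apply/setP=> k; rewrite inE; apply/idP/imsetP.
    by move=> hk; exists (Ordinal hk) => //; apply: val_inj.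
  by case=> k' _ ->; rewrite /= ltn_ord.
rewrite card_imset ?card_ord //; by move=> a b /(congr1 val) /= e; apply: val_inj.
Qed.

Section Chain.
Variable S : {set {set {set T}}}.
Hypothesis hS : in_C S.

Definition F := [set cb P | P in S].

Lemma F_prop X : X \in F -> [/\ ord0 \in X, 1 < #|X| & #|X| < n].
Proof.
case/and3P: hS => _ /forallP hA _.
case/imsetP=> P hP ->; move: (hA P); rewrite hP => /inA_cb[]; by [].
Qed.

Lemma F_cmp X Y : X \in F -> Y \in F -> (X \subset Y) || (Y \subset X).
Proof.
case/and3P: hS => _ /forallP hA /forallP hR.
case/imsetP=> P hP ->; case/imsetP=> Q hQ ->.
move: (hA P) (hA Q); rewrite hP hQ /= => /inA_cb[eP h0 _ _] /inA_cb[eQ h0' _ _].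
move: (hR P); rewrite hP /= => /forallP/(_ Q); rewrite hQ /=.
rewrite {1}eP {1}eQ {2}eP {2}eQ.
by case/orP=> /refines_pA h; rewrite h ?orbT.
Qed.

Lemma F_card : #|F| = n - 2.
Proof.
case/and3P: hS => /eqP hc /forallP hA _.
rewrite card_in_imset ?hc // => P Q hP hQ e.
move: (hA P) (hA Q); rewrite hP hQ /= => /inA_cb[eP _ _ _] /inA_cb[eQ _ _ _].
by rewrite eP eQ e.
Qed.

Lemma F_eq X Y : X \in F -> Y \in F -> #|X| = #|Y| -> X = Y.
Proof.
move=> hX hY e; case/orP: (F_cmp hX hY) => h.
  by apply/eqP; rewrite eqEcard h e leqnn.
by symmetry; apply/eqP; rewrite eqEcard h e leqnn.
Qed.

Lemma F_exists k : 1 < k < n -> exists2 X, X \in F & #|X| = k.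
Proof.
case/andP=> hk1 hkn.
set K := [set (inord #|X| : T) | X : {set T} in F].
have hK : K = ~: [set ord0; inord 1].
  apply/eqP; rewrite eqEcard; apply/andP; split.
    apply/subsetP=> x /imsetP[X hX ->]; case: (F_prop hX) => _ h1 h2.
    rewrite !inE; apply/negP=> /orP[] /eqP/(congr1 val); rewrite /= !inordK //; by move=> e; move: h1 h2; rewrite e.
  have : #|[set (ord0 : T); inord 1]| + #|~: [set (ord0 : T); inord 1]| = n by rewrite cardsC card_ord.
  rewrite cards2.
  have -> : (ord0 : T) != inord 1 by apply/negP=> /eqP/(congr1 val); rewrite /= inordK.
  rewrite /K card_in_imset ?F_card; first lia.
  move=> X Y hX hY /(congr1 val); rewrite /= !inordK; first exact: F_eq.
    by case: (F_prop hY).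
  by case: (F_prop hX).
have : (inord k : T) \in K.
  rewrite hK !inE; apply/negP=> /orP[] /eqP/(congr1 val); rewrite /= !inordK //; lia.
case/imsetP=> X hX /(congr1 val); rewrite /= !inordK //; last by case: (F_prop hX).
by move=> ->; exists X.
Qed.

Definition L k : {set T} :=
  if k <= 1 then [set ord0] else if k < n then odflt setT [pick X in F | #|X| == k]
  else setT.

Lemma L_in k : 1 < k < n -> L k \in F /\ #|L k| = k.
Proof.
move=> hk; rewrite /L; case/andP: (hk) => h1 h2; rewrite leqNgt h1 h2 /=.
case: pickP => [X /andP[hX /eqP]|] //=.
case: (F_exists hk) => X hX hc /(_ X); by rewrite hX hc eqxx.
Qed.

Lemma L_card k : 0 < k <= n -> #|L k| = k.
Proof.
case/andP=> h0 h1; case: (ltnP 1 k) => h2.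
  case: (ltnP k n) => h3; first by case: (L_in (_ : 1 < k < n)) => //; rewrite h2.
  by rewrite /L leqNgt h2 ltnNge h3 /= cardsT card_ord; lia.
by rewrite /L h2 cards1; lia.
Qed.

Lemma L0 k : ord0 \in L k.
Proof.
rewrite /L; case: ifP => _; first by rewrite inE.
case: ifP => hk; last by rewrite inE.
by case: pickP => [X /andP[hX _]|] /=; [case: (F_prop hX)|rewrite inE].
Qed.

Lemma L_mono k k' : 0 < k -> k <= k' -> L k \subset L k'.
Proof.
move=> h0 hkk.
case: (leqP k 1) => h1; first by rewrite {1}/L h1 sub1set L0.
case: (leqP n k') => h2; first by rewrite {2}/L leqNgt (leq_trans h1 hkk) /= ltnNge h2 subsetT.
have [hF hc] : L k \in F /\ #|L k| = k by apply: L_in; rewrite h1 (leq_ltn_trans hkk h2).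
have [hF' hc'] : L k' \in F /\ #|L k'| = k' by apply: L_in; rewrite h2 (leq_trans h1 hkk).
case/orP: (F_cmp hF hF') => // h.
have ekk : k = k'.
  apply/eqP; rewrite eqn_leq hkk -hc -hc' subset_leq_card //.
by rewrite ekk.
Qed.

Definition g (i : T) := #|[set k : T | i \notin L k.+1]|.

Lemma gP i j : j < n -> (i \in L j.+1) = (g i <= j).
Proof.
move=> hj; apply/idP/idP => h.
  rewrite -(card_lt (ltnW hj)); apply: subset_leq_card; apply/subsetP=> k.
  rewrite !inE; apply: contraR; rewrite -leqNgt => hk.
  exact: (subsetP (L_mono _ _) _ h).
apply: contraLR h => h; rewrite -ltnNge -{1}(card_lt hj); apply: subset_leq_card.
apply/subsetP=> k; rewrite !inE => hk; apply: contra h => h.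
exact: (subsetP (L_mono _ _) _ h).
Qed.

Lemma g_lt i : g i < n.
Proof.
by rewrite ltnS -gP // /L /= ltnn inE.
Qed.

Lemma g0 : g ord0 = 0.
Proof. by apply/eqP; rewrite -leqn0 -gP ?L0. Qed.

Lemma L_g j : j < n -> L j.+1 = [set x | g x <= j].
Proof. by move=> hj; apply/setP=> x; rewrite inE gP. Qed.

Lemma g_inj : injective g.
Proof.
move=> i j e; apply/eqP/negPn/negP => hij.
set v := g i.
have hv : v < n by apply: g_lt.
have cU : #|[set x | g x <= v]| = v.+1 by rewrite -L_g // L_card.
have cV : #|[set x | g x < v]| = v.
  case: (posnP v) => [->|hp].
    by apply/eqP; rewrite cards_eq0; apply/eqP/setP=> x; rewrite !inE.
  have -> : [set x | g x < v] = L v.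
    by rewrite -(prednK hp) L_g ?(leq_ltn_trans (leq_pred _)) //; apply/setP=> x; rewrite !inE prednK.
  by rewrite L_card // hp ltnW.
have : i |: (j |: [set x | g x < v]) \subset [set x | g x <= v].
  apply/subsetP=> x; rewrite !inE => /orP[/eqP->|/orP[/eqP->|/ltnW//]].
    by rewrite leqnn.
  by rewrite -e leqnn.
move/subset_leq_card; rewrite cU !cardsU1 cV !inE -e ltnn /= orbF hij.
by rewrite ltnn.
Qed.

Definition gp (i : T) : T := Ordinal (g_lt i).
Lemma gp_inj : injective gp.
Proof. by move=> a b /(congr1 val) /= /g_inj. Qed.
Definition p : {perm T} := perm gp_inj.
Lemma pE i : val (p i) = g i.
Proof. by rewrite /p permE. Qed.

Lemma F_L X : X \in F -> X = L #|X|.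
Proof.
move=> hX; case: (F_prop hX) => _ h1 h2.
have [hF hc] : L #|X| \in F /\ #|L #|X| | = #|X| by apply: L_in; rewrite h1 h2.
by apply: F_eq => //; rewrite hc.
Qed.

Lemma S_pA P : P \in S -> P = pA (cb P).
Proof.
case/and3P: hS => _ /forallP hA _ hP.
by move: (hA P); rewrite hP => /inA_cb[].
Qed.

Lemma S_F P : P \in S -> cb P \in F.
Proof. by move=> hP; apply: imset_f. Qed.

End Chain.

Lemma free_main s S : in_C S -> s ord0 = ord0 -> simp_act s S = S -> s = 1%g.
Proof.
move=> hS hs0 hsS.
have hL : forall j, j < n -> s @: L S j.+1 = L S j.+1.
  move=> j hj; case: (posnP j) => [->|hjp].
    by rewrite /L /= imset_set1 hs0.
  case: (ltnP j.+1 n) => hjn; last first.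
    have -> : L S j.+1 = setT.
      rewrite /L; have -> : (j.+1 < n) = false by rewrite ltnNge hjn.
      by rewrite ltnS leqNgt hjp.
    apply/eqP; rewrite eqEcard subsetT /= card_imset; last exact: perm_inj.
    by rewrite leqnn.
  have [hF hc] : L S j.+1 \in F S /\ #|L S j.+1| = j.+1.
    by apply: L_in; rewrite // ltnS hjp hjn.
  case/imsetP: (hF) => P hP eP.
  have hA : in_A P by case/and3P: hS => _ /forallP /(_ P); rewrite hP.
  case: (inA_cb hA) => eP' h0 _ _.
  have hP' : part_act s P \in S by rewrite -hsS; apply: imset_f.
  have hsX : ord0 \in s @: cb P by rewrite -hs0 imset_f.
  have : s @: cb P \in F S.
    by rewrite -(cb_pA hsX) -part_act_pA -eP'; apply: S_F.
  move=> hF'; rewrite eP; apply: (F_eq hS); [exact: hF'|exact: S_F|].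
  rewrite card_imset //; exact: perm_inj.
have gs : forall i, g S (s i) = g S i.
  move=> i.
  have e : forall j, j < n -> (g S (s i) <= j) = (g S i <= j).
    by move=> j hj; rewrite -!gP // -{1}(hL j hj) mem_imset //; exact: perm_inj.
  apply/eqP; rewrite eqn_leq e ?g_lt // leqnn -e ?g_lt // leqnn.
  by [].
apply/permP => i; rewrite perm1; apply: (g_inj hS); exact: gs.
Qed.

Lemma trans_main S1 S2 : in_C S1 -> in_C S2 ->
  exists s : {perm T}, s ord0 = ord0 /\ simp_act s S1 = S2.
Proof.
move=> h1 h2.
pose s := (p h1 * (p h2)^-1)%g.
have gs : forall i, g S2 (s i) = g S1 i.
  move=> i; rewrite -pE -(pE h1); congr val; by rewrite /s permM permKV.
have hs0 : s ord0 = ord0.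
  apply: (g_inj h2); by rewrite gs !g0.
have hL : forall j, j < n -> s @: L S1 j.+1 = L S2 j.+1.
  move=> j hj; apply/eqP; rewrite eqEcard card_imset; last exact: perm_inj.
  rewrite !L_card // ltnSn andbT; apply/subsetP=> x /imsetP[i hi ->].
  by rewrite (gP h2) // gs -(gP h1).
have hLk : forall k, 0 < k <= n -> s @: L S1 k = L S2 k.
  by move=> [|j] // /andP[_ hj]; apply: hL.
exists s; split=> //.
apply/setP=> Q; apply/imsetP/idP.
  case=> P hP ->.
  have hX := S_F hP; case: (F_prop h1 hX) => h0 hc1 hc2.
  rewrite (S_pA h1 hP) part_act_pA {1}(F_L h1 hX) hLk ?(ltnW hc2) ?(ltnW hc1) //.
  have [hF _] : L S2 #|cb P| \in F S2 /\ #|L S2 #|cb P| | = #|cb P|.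
    by apply: (L_in h2); rewrite hc1 hc2.
  by case/imsetP: hF => Q' hQ' ->; rewrite -(S_pA h2 hQ').
move=> hQ; have hY := S_F hQ; case: (F_prop h2 hY) => h0 hc1 hc2.
have [hF _] : L S1 #|cb Q| \in F S1 /\ #|L S1 #|cb Q| | = #|cb Q|.
  by apply: (L_in h1); rewrite hc1 hc2.
case/imsetP: hF => P hP eP; exists P => //.
rewrite {1}(S_pA h2 hQ) (S_pA h1 hP) part_act_pA -eP hLk -?F_L // ?(ltnW hc2) ?(ltnW hc1) //.
Qed.

End Main.

Theorem lemma16 (n : nat) (hn : 3 <= n) :
  (* the action of S_1 x S_{n-1} preserves C_n *)
  (forall (s : {perm 'I_n}) (S : {set {set {set 'I_n}}}),
      fixes1 s -> in_C S -> in_C (simp_act s S)) /\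
  (* transitivity *)
  (forall S1 S2 : {set {set {set 'I_n}}}, in_C S1 -> in_C S2 ->
      exists s : {perm 'I_n}, fixes1 s /\ simp_act s S1 = S2) /\
  (* freeness *)
  (forall (s : {perm 'I_n}) (S : {set {set {set 'I_n}}}),
      fixes1 s -> in_C S -> simp_act s S = S -> s = 1%g).
Proof.
case: n hn => [|[|[|m]]] // _.
split; [|split].
- by move=> s S hs; apply: part1; apply: hs.
- move=> S1 S2 h1 h2; case: (trans_main h1 h2) => s [hs0 e].
  exists s; split=> // i hi; have -> : i = ord0 by apply: val_inj.
  exact: hs0.
- by move=> s S hs hS; apply: free_main => //; apply: hs.
Qed.
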